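(* Let $U\in C(\mathbb R^n)$ be strictly $v$-convex with constant $\alpha>0$. Then for every $c\ge-(m-1)\alpha$ and every $r\in\mathbb R$, the function $u(x,t)=ct-U(x)+r$ is a viscosity supersolution of the horizontal mean curvature flow equation $$u_t-\operatorname{tr}\Big[\Big(I_m-\frac{Xu}{|Xu|}\otimes\frac{Xu}{|Xu|}\Big)X^2u\Big]=0\quad\text{in }\mathbb R^n\times(0,+\infty).$$
   Context: Step two Carnot group setting. Write $\mathbb R^n=\mathbb R^m\times\mathbb R^{n-m}$ with $2\le m<n$ and points $x=(x_h,x_v)$. Fix $n-m$ linearly independent skew-symmetric $m\times m$ real matrices $B^{(1)},\dots,B^{(n-m)}$. Let $\sigma(x)$ be the $n\times m$ matrix whose first $m$ rows form $I_m$ and whose $(m+k)$-th row is ${}^t(B^{(k)}x_h)$. The vector fields are $X_j=\sum_{i}\sigma_{ij}(x)\partial_i$. For $u\in C^2$, $Xu=\nabla u\,\sigma(x)$ and $X^2u={}^t\sigma(x)D^2u\,\sigma(x)$. The horizontal mean curvature flow equation is $u_t+F(Xu,X^2u)=0$ with $F(q,A)=-\operatorname{tr}[(I_m-\frac{q}{|q|}\otimes\frac{q}{|q|})A]$ for $q\in\mathbb R^m\setminus\{0\}$, $A\in\mathcal S^m$. Viscosity supersolution: a lower semicontinuous $u$ such that for every $\phi\in C^2$ and every local minimum point $(x,t)$ of $u-\phi$, $\phi_t(x,t)+G^*(x,t,\nabla\phi(x,t),D^2\phi(x,t))\ge0$, where $G(x,t,p,A)=F(p\sigma(x),{}^t\sigma(x)A\sigma(x))$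 for $p\sigma(x)\ne0$ and $G^*$ is its upper semicontinuous envelope on $\mathbb R^n\times(0,\infty)\times\mathbb R^n\times\mathcal S^n$. Definition: a continuous $U:\mathbb R^n\to\mathbb R$ is $v$-convex if there is $\alpha\ge0$ such that for every $\phi\in C^2(\mathbb R^n)$ for which $U-\phi$ has a local maximum at $x_o$, one has $X^2\phi(x_o)\ge\alpha I_m$; it is strictly $v$-convex (with constant $\alpha$) if this holds with some $\alpha>0$. *)

(* Defs.v *)
From Stdlib Require Import Reals Lra.
Open Scope R_scope.

(* Points of R^d are encoded as  x : nat -> R  with  x i = 0  for  i >= d.
   Coordinates are 0-based: x_h = (x 0, ..., x (m-1)), x_v = (x m, ..., x (n-1)). *)
Definition inRd (d : nat) (x : nat -> R) : Prop := forall i, (d <= i)%nat -> x i = 0.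

Fixpoint fsum (k : nat) (f : nat -> R) : R :=
  match k with O => 0 | S k' => fsum k' f + f k' end.

Definition upd (x : nat -> R) (i : nat) (h : R) : nat -> R :=
  fun j => if Nat.eqb j i then x j + h else x j.

Definition near (d : nat) (x y : nat -> R) (delta : R) : Prop :=
  forall i, (i < d)%nat -> Rabs (y i - x i) < delta.

Definition proj (n : nat) (z : nat -> R) : nat -> R :=
  fun i => if Nat.ltb i n then z i else 0.

Definition cont_on (d : nat) (Om : (nat -> R) -> Prop) (f : (nat -> R) -> R) : Prop :=
  forall x, inRd d x -> Om x -> forall eps, 0 < eps -> exists delta, 0 < delta /\
    forall y, inRd d y -> Om y -> near d x y delta -> Rabs (f y - f x) < eps.

Definition lsc_on (d : nat) (Om : (nat -> R) -> Prop) (f : (nat -> R) -> R) : Prop :=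
  forall x, inRd d x -> Om x -> forall eps, 0 < eps -> exists delta, 0 < delta /\
    forall y, inRd d y -> Om y -> near d x y delta -> f y > f x - eps.

Definition C2_on (d : nat) (Om : (nat -> R) -> Prop) (f : (nat -> R) -> R)
  (Df : nat -> (nat -> R) -> R) (D2f : nat -> nat -> (nat -> R) -> R) : Prop :=
  (forall x, inRd d x -> Om x -> forall i, (i < d)%nat ->
     derivable_pt_lim (fun h => f (upd x i h)) 0 (Df i x)) /\
  (forall x, inRd d x -> Om x -> forall i j, (i < d)%nat -> (j < d)%nat ->
     derivable_pt_lim (fun h => Df j (upd x i h)) 0 (D2f i j x)) /\
  cont_on d Om f /\
  (forall i, (i < d)%nat -> cont_on d Om (Df i)) /\
  (forall i j, (i < d)%nat -> (j < d)%nat -> cont_on d Om (D2f i j)).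

(* B k i j = (B^{(k+1)})_{ij}, k < n-m, i,j < m *)
Definition skew_family (n m : nat) (B : nat -> nat -> nat -> R) : Prop :=
  forall k i j, (k < n - m)%nat -> (i < m)%nat -> (j < m)%nat -> B k i j = - B k j i.

Definition lin_indep_family (n m : nat) (B : nat -> nat -> nat -> R) : Prop :=
  forall c : nat -> R,
    (forall i j, (i < m)%nat -> (j < m)%nat -> fsum (n - m) (fun k => c k * B k i j) = 0) ->
    forall k, (k < n - m)%nat -> c k = 0.

Definition sigma (m : nat) (B : nat -> nat -> nat -> R) (x : nat -> R) (i j : nat) : R :=
  if Nat.ltb i m then (if Nat.eqb i j then 1 else 0)
  else fsum m (fun l => B (i - m)%nat j l * x l).

Definition Xvec (n m : nat) B (x p : nat -> R) (j : nat) : R :=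
  fsum n (fun i => p i * sigma m B x i j).

Definition X2mat (n m : nat) B (x : nat -> R) (A : nat -> nat -> R) (j l : nat) : R :=
  fsum n (fun i => fsum n (fun i' => sigma m B x i j * A i i' * sigma m B x i' l)).

Definition sqnorm (m : nat) (q : nat -> R) : R := fsum m (fun j => q j ^ 2).

Definition Fop (m : nat) (q : nat -> R) (A : nat -> nat -> R) : R :=
  - (fsum m (fun j => A j j)
     - fsum m (fun j => fsum m (fun l => (q j / sqrt (sqnorm m q)) * (q l / sqrt (sqnorm m q)) * A l j))).

Definition Gop (n m : nat) B (x p : nat -> R) (A : nat -> nat -> R) : R :=
  Fop m (Xvec n m B x p) (X2mat n m B x A).

Definition G_dom (n m : nat) B (x : nat -> R) (t : R) (p : nat -> R) (A : nat -> nat -> R) : Prop :=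
  inRd n x /\ 0 < t /\ inRd n p /\
  (forall i j, (i < n)%nat -> (j < n)%nat -> A i j = A j i) /\
  exists j, (j < m)%nat /\ Xvec n m B x p j <> 0.

Definition close4 (n : nat) x t p (A : nat -> nat -> R) x' t' p' (A' : nat -> nat -> R) delta : Prop :=
  near n x x' delta /\ Rabs (t' - t) < delta /\ near n p p' delta /\
  (forall i j, (i < n)%nat -> (j < n)%nat -> Rabs (A' i j - A i j) < delta).

(* L = G^*(x,t,p,A) = limsup of G over admissible points tending to (x,t,p,A) *)
Definition Gstar_is (n m : nat) B (x : nat -> R) (t : R) (p : nat -> R)
  (A : nat -> nat -> R) (L : R) : Prop :=
  forall eps, 0 < eps ->
    (exists delta, 0 < delta /\ forall x' t' p' A', G_dom n m B x' t' p' A' ->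
        close4 n x t p A x' t' p' A' delta -> Gop n m B x' p' A' < L + eps) /\
    (forall delta, 0 < delta -> exists x' t' p' A', G_dom n m B x' t' p' A' /\
        close4 n x t p A x' t' p' A' delta /\ Gop n m B x' p' A' > L - eps).

(* Space-time points (x,t) in R^n x R are encoded as z in R^{n+1}, with x = proj n z
   and t = z n. The domain is R^n x (0,+oo). *)
Definition spacetime (n : nat) : (nat -> R) -> Prop := fun z => 0 < z n.

Definition supersol (n m : nat) B (u : (nat -> R) -> R) : Prop :=
  lsc_on (S n) (spacetime n) u /\
  forall (phi : (nat -> R) -> R) Dphi D2phi,
    C2_on (S n) (spacetime n) phi Dphi D2phi ->
    forall z, inRd (S n) z -> spacetime n z ->
      (exists delta, 0 < delta /\ forall y, inRd (S n) y -> spacetime n y ->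
          near (S n) z y delta -> u y - phi y >= u z - phi z) ->
      exists L, Gstar_is n m B (proj n z) (z n) (proj n (fun i => Dphi i z))
                  (fun i j => D2phi i j z) L /\
                Dphi n z + L >= 0.

Definition vconvex_with (n m : nat) B (U : (nat -> R) -> R) (alpha : R) : Prop :=
  forall (phi : (nat -> R) -> R) Dphi D2phi,
    C2_on n (fun _ => True) phi Dphi D2phi ->
    forall xo, inRd n xo ->
      (exists delta, 0 < delta /\ forall y, inRd n y -> near n xo y delta ->
          U y - phi y <= U xo - phi xo) ->
      forall xi : nat -> R,
        fsum m (fun j => fsum m (fun l => xi j * X2mat n m B xo (fun i i' => D2phi i i' xo) j l * xi l))
        >= alpha * sqnorm m xi.

(* Main.v *)
From Stdlib Require Import Reals Lra Lia Classical FunctionalExtensionality.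
From Coquelicot Require Import Coquelicot.
Require Import Defs.
Open Scope R_scope.


Lemma fsum_ext k f g : (forall i, (i < k)%nat -> f i = g i) -> fsum k f = fsum k g.
Proof. induction k; simpl; intros H; [reflexivity|]. rewrite IHk by (intros; apply H; lia). rewrite H by lia. reflexivity. Qed.

Lemma fsum_plus k f g : fsum k (fun i => f i + g i) = fsum k f + fsum k g.
Proof. induction k; simpl; [lra|]. rewrite IHk; lra. Qed.

Lemma fsum_minus k f g : fsum k (fun i => f i - g i) = fsum k f - fsum k g.
Proof. induction k; simpl; [lra|]. rewrite IHk; lra. Qed.

Lemma fsum_scal k a f : fsum k (fun i => a * f i) = a * fsum k f.
Proof. induction k; simpl; [lra|]. rewrite IHk; lra. Qed.

Lemma fsum_opp k f : fsum k (fun i => - f i) = - fsum k f.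
Proof. induction k; simpl; [lra|]. rewrite IHk; lra. Qed.

Lemma fsum_const1 k : fsum k (fun _ => 1) = INR k.
Proof. induction k; simpl fsum; [simpl; lra|]. rewrite IHk, S_INR; lra. Qed.

Lemma fsum_swap k l (f : nat -> nat -> R) :
  fsum k (fun i => fsum l (fun j => f i j)) = fsum l (fun j => fsum k (fun i => f i j)).
Proof.
  induction k; simpl.
  - induction l; simpl; [lra|]. rewrite <- IHl; lra.
  - rewrite IHk. rewrite <- fsum_plus. reflexivity.
Qed.

Lemma fsum_delta k i (g : nat -> R) : (i < k)%nat ->
  fsum k (fun j => (if Nat.eqb j i then 1 else 0) * g j) = g i.
Proof.
  induction k; intros H; [lia|]. simpl.
  destruct (Nat.eq_dec i k) as [->|Hne].
  - rewrite Nat.eqb_refl.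
    rewrite (fsum_ext k _ (fun _ => 0)).
    + clear. assert (fsum k (fun _ => 0) = 0) as -> by (induction k; simpl; lra). lra.
    + intros j Hj. destruct (Nat.eqb_spec j k); [lia|lra].
  - rewrite IHk by lia. destruct (Nat.eqb_spec k i); [lia|lra].
Qed.

Lemma fsum_le k f g : (forall i, (i < k)%nat -> f i <= g i) -> fsum k f <= fsum k g.
Proof. induction k; simpl; intros H; [lra|]. specialize (IHk (fun i Hi => H i ltac:(lia))). specialize (H k ltac:(lia)). lra. Qed.

Lemma fsum_nonneg k f : (forall i, (i < k)%nat -> 0 <= f i) -> 0 <= fsum k f.
Proof. intros H. assert (fsum k (fun _ => 0) = 0) as E by (clear; induction k; simpl; lra). rewrite <- E. apply fsum_le. auto. Qed.

Lemma fsum_abs k f : Rabs (fsum k f) <= fsum k (fun i => Rabs (f i)).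
Proof. induction k; simpl. rewrite Rabs_R0; lra. eapply Rle_trans; [apply Rabs_triang|]. lra. Qed.

Lemma fsum_abs_le k f g : (forall i, (i < k)%nat -> Rabs (f i) <= g i) -> Rabs (fsum k f) <= fsum k g.
Proof. intros H. eapply Rle_trans; [apply fsum_abs|]. apply fsum_le; auto. Qed.

Lemma fsum_ge_term k f i0 : (forall i, (i < k)%nat -> 0 <= f i) -> (i0 < k)%nat -> f i0 <= fsum k f.
Proof.
  induction k; intros H Hi; [lia|]. simpl.
  destruct (Nat.eq_dec i0 k) as [->|Hne].
  - assert (0 <= fsum k f) by (apply fsum_nonneg; intros; apply H; lia). lra.
  - assert (f i0 <= fsum k f) by (apply IHk; [intros; apply H|]; lia). specialize (H k ltac:(lia)). lra.
Qed.

Lemma fsum_upd k (p g : nat -> R) i0 s : (i0 < k)%nat ->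
  fsum k (fun i => upd p i0 s i * g i) = fsum k (fun i => p i * g i) + s * g i0.
Proof.
  intros H.
  rewrite (fsum_ext k _ (fun i => p i * g i + s * ((if Nat.eqb i i0 then 1 else 0) * g i))).
  - rewrite fsum_plus, fsum_scal, fsum_delta by exact H. reflexivity.
  - intros i Hi. unfold upd. destruct (Nat.eqb i i0); ring.
Qed.


Definition dl (j k : nat) : R := if Nat.eqb j k then 1 else 0.

Lemma stepA m (M : nat -> nat -> R) (a : nat -> R) k : (k < m)%nat ->
  let c := a k in
  fsum m (fun j => fsum m (fun l => (dl j k - c * a j) * M j l * (dl l k - c * a l)))
  = M k k - c * fsum m (fun l => M k l * a l) - c * fsum m (fun j => a j * M j k)
    + c ^ 2 * fsum m (fun j => a j * fsum m (fun l => M j l * a l)).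
Proof.
  intros Hk c.
  rewrite (fsum_ext m _ (fun j => (dl j k - c * a j) * M j k - c * (dl j k - c * a j) * fsum m (fun l => M j l * a l))).
  2:{ intros j Hj.
      rewrite (fsum_ext m _ (fun l => (dl j k - c * a j) * ((if Nat.eqb l k then 1 else 0) * M j l) - (c * (dl j k - c * a j)) * (M j l * a l))).
      2:{ intros l Hl. unfold dl. ring. }
      rewrite fsum_minus, fsum_scal, fsum_scal, fsum_delta by exact Hk. ring. }
  rewrite (fsum_ext m _ (fun j => (((if Nat.eqb j k then 1 else 0) * M j k - c * (a j * M j k)) - c * ((if Nat.eqb j k then 1 else 0) * fsum m (fun l => M j l * a l))) + c ^ 2 * (a j * fsum m (fun l => M j l * a l)))).
  2:{ intros j Hj. unfold dl. ring. }
  rewrite fsum_plus, !fsum_minus, !fsum_scal, !fsum_delta by exact Hk. ring.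
Qed.

Lemma stepB m (a : nat -> R) k : (k < m)%nat -> fsum m (fun j => a j ^ 2) = 1 ->
  sqnorm m (fun j => dl j k - a k * a j) = 1 - a k ^ 2.
Proof.
  intros Hk H1. unfold sqnorm.
  rewrite (fsum_ext m _ (fun j => ((if Nat.eqb j k then 1 else 0) * (1 - 2 * a k * a j)) + a k ^ 2 * a j ^ 2)).
  2:{ intros j Hj. unfold dl. destruct (Nat.eqb j k); ring. }
  rewrite fsum_plus, fsum_scal, fsum_delta, H1 by exact Hk. ring.
Qed.

Lemma trace_lemma m (M : nat -> nat -> R) (a : nat -> R) alpha :
  fsum m (fun j => a j ^ 2) = 1 ->
  (forall xi, fsum m (fun j => fsum m (fun l => xi j * M j l * xi l)) >= alpha * sqnorm m xi) ->
  fsum m (fun j => M j j) - fsum m (fun j => fsum m (fun l => a j * a l * M l j)) >= (INR m - 1) * alpha.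
Proof.
  intros H1 Hq.
  set (Q := fsum m (fun j => a j * fsum m (fun l => M j l * a l))).
  assert (HS : fsum m (fun k => fsum m (fun j => fsum m (fun l => (dl j k - a k * a j) * M j l * (dl l k - a k * a l))))
               >= fsum m (fun k => alpha * (1 - a k ^ 2))).
  { apply Rle_ge, fsum_le. intros k Hk. rewrite <- stepB with (m:=m) by assumption.
    apply Rge_le, (Hq (fun j => dl j k - a k * a j)). }
  rewrite (fsum_ext m _ (fun k => ((M k k - a k * fsum m (fun l => M k l * a l)) - fsum m (fun j => a k * a j * M j k)) + Q * a k ^ 2)) in HS.
  2:{ intros k Hk. rewrite stepA by exact Hk. rewrite <- (fsum_scal m (a k) (fun j => a j * M j k)).
      rewrite (fsum_ext m (fun j => a k * (a j * M j k)) (fun j => a k * a j * M j k)) by (intros; ring). unfold Q. ring. }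
  rewrite fsum_plus, !fsum_minus in HS.
  rewrite (fsum_scal m Q (fun i => a i ^ 2)), H1 in HS.
  rewrite (fsum_scal m alpha (fun k => 1 - a k ^ 2)), fsum_minus, fsum_const1, H1 in HS.
  fold Q in HS. lra.
Qed.


Lemma sqnorm_pos m q : (exists j, (j < m)%nat /\ q j <> 0) -> 0 < sqnorm m q.
Proof.
  intros [j [Hj Hq]]. unfold sqnorm.
  apply Rlt_le_trans with (q j ^ 2).
  - assert (0 < q j * q j) by (apply Rsqr_pos_lt; exact Hq). simpl; lra.
  - apply (fsum_ge_term m (fun j => q j ^ 2)); [intros; apply pow2_ge_0|exact Hj].
Qed.

Lemma unit_sum m q : 0 < sqnorm m q ->
  fsum m (fun j => (q j / sqrt (sqnorm m q)) ^ 2) = 1.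
Proof.
  intros Hp. remember (sqnorm m q) as S eqn:ES. remember (sqrt S) as s eqn:Es.
  assert (Hs2 : s * s = S) by (rewrite Es; apply sqrt_sqrt; lra).

  assert (Hs : 0 < s) by (rewrite Es; apply sqrt_lt_R0; exact Hp).
  rewrite (fsum_ext m _ (fun j => / (s * s) * q j ^ 2)).
  - rewrite fsum_scal. fold (sqnorm m q). rewrite <- ES, <- Hs2. field. lra.
  - intros j _. rewrite Es. field. rewrite <- Es. lra.
Qed.

Lemma unit_bound m q j : 0 < sqnorm m q -> (j < m)%nat -> Rabs (q j / sqrt (sqnorm m q)) <= 1.
Proof.
  intros Hp Hj.
  assert (Hs : 0 < sqrt (sqnorm m q)) by (apply sqrt_lt_R0; exact Hp).
  assert (Hle : q j ^ 2 <= sqnorm m q).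
  { apply (fsum_ge_term m (fun j => q j ^ 2)); [intros; apply pow2_ge_0|exact Hj]. }
  assert (Ha : Rabs (q j) <= sqrt (sqnorm m q)).
  { rewrite <- sqrt_Rsqr_abs. apply sqrt_le_1_alt. unfold Rsqr. simpl in Hle. lra. }
  unfold Rdiv. rewrite Rabs_mult, Rabs_inv, (Rabs_right (sqrt _)) by lra.
  apply Rmult_le_reg_r with (sqrt (sqnorm m q)); [lra|].
  rewrite Rmult_assoc, Rinv_l by lra. lra.
Qed.

Lemma Fop_lower m q N alpha :
  (exists j, (j < m)%nat /\ q j <> 0) ->
  (forall xi, fsum m (fun j => fsum m (fun l => xi j * (- N j l) * xi l)) >= alpha * sqnorm m xi) ->
  Fop m q N >= (INR m - 1) * alpha.
Proof.
  intros Hq Hv. pose proof (sqnorm_pos m q Hq) as Hp.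
  pose proof (trace_lemma m (fun j l => - N j l) (fun j => q j / sqrt (sqnorm m q)) alpha (unit_sum m q Hp) Hv) as T.
  unfold Fop. simpl in T.
  rewrite fsum_opp in T.
  rewrite (fsum_ext m (fun j => fsum m (fun l => q j / sqrt (sqnorm m q) * (q l / sqrt (sqnorm m q)) * - N l j))
     (fun j => - fsum m (fun l => q j / sqrt (sqnorm m q) * (q l / sqrt (sqnorm m q)) * N l j))) in T.
  2:{ intros j _. rewrite <- fsum_opp. apply fsum_ext. intros; ring. }
  rewrite fsum_opp in T. lra.
Qed.

Lemma Fop_upper m q N : 0 < sqnorm m q ->
  Fop m q N <= fsum m (fun j => Rabs (N j j)) + fsum m (fun j => fsum m (fun l => Rabs (N l j))).
Proof.
  intros Hp. unfold Fop.
  assert (H1 : - fsum m (fun j => N j j) <= fsum m (fun j => Rabs (N j j))).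
  { rewrite <- fsum_opp. apply fsum_le. intros. pose proof (Rle_abs (- N i i)). rewrite Rabs_Ropp in H0. lra. }
  assert (H2 : fsum m (fun j => fsum m (fun l => q j / sqrt (sqnorm m q) * (q l / sqrt (sqnorm m q)) * N l j))
              <= fsum m (fun j => fsum m (fun l => Rabs (N l j)))).
  { apply fsum_le. intros j Hj. apply fsum_le. intros l Hl.
    eapply Rle_trans; [apply Rle_abs|]. rewrite !Rabs_mult.
    pose proof (unit_bound m q j Hp Hj). pose proof (unit_bound m q l Hp Hl).
    pose proof (Rabs_pos (q j / sqrt (sqnorm m q))). pose proof (Rabs_pos (q l / sqrt (sqnorm m q))).
    pose proof (Rabs_pos (N l j)).
    apply Rle_trans with (1 * 1 * Rabs (N l j)); [|lra].
    apply Rmult_le_compat_r; [lra|]. apply Rmult_le_compat; lra. }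
  lra.
Qed.


Lemma shift_lim (g F : R -> R) v l : (forall h, g h = F (v + h)) ->
  derivable_pt_lim g 0 l -> derivable_pt_lim F v l.
Proof.
  unfold derivable_pt_lim. intros E H eps He. destruct (H eps He) as [d Hd]. exists d.
  intros h Hh Hd'. specialize (Hd h Hh Hd'). rewrite !E, Rplus_0_l, Rplus_0_r in Hd. exact Hd.
Qed.

Definition w2 (z : nat -> R) i j u v := upd (upd z i u) j v.

Lemma w2_j z i j u v h : upd (w2 z i j u v) j h = w2 z i j u (v + h).
Proof. apply functional_extensionality. intros k. unfold w2, upd.
  destruct (Nat.eqb k j), (Nat.eqb k i); ring. Qed.

Lemma w2_i z i j u v h : i <> j -> upd (w2 z i j u v) i h = w2 z i j (u + h) v.
Proof. intros Hij. apply functional_extensionality. intros k. unfold w2, upd.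
  destruct (Nat.eqb_spec k j), (Nat.eqb_spec k i); subst; try ring; lia. Qed.

Lemma w2_00 z i j : w2 z i j 0 0 = z.
Proof. apply functional_extensionality. intros k. unfold w2, upd.
  destruct (Nat.eqb k j), (Nat.eqb k i); ring. Qed.

Lemma w2_inRd d z i j u v : inRd d z -> (i < d)%nat -> (j < d)%nat -> inRd d (w2 z i j u v).
Proof. intros H Hi Hj k Hk. unfold w2, upd.
  destruct (Nat.eqb_spec k j), (Nat.eqb_spec k i); try lia. apply H; lia. Qed.

Lemma w2_near d z i j u v delta : i <> j -> Rabs u < delta -> Rabs v < delta -> 0 < delta ->
  near d z (w2 z i j u v) delta.
Proof. intros Hij Hu Hv Hd k Hk. unfold w2, upd.
  destruct (Nat.eqb_spec k j), (Nat.eqb_spec k i); subst; try lia;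
  match goal with |- Rabs ?e < _ => first [replace e with u by ring | replace e with v by ring | replace e with 0 by ring] end;
  try rewrite Rabs_R0; lra.
Qed.

Lemma schwarz_C2 d Om phi Dphi D2phi z i j :
  C2_on d Om phi Dphi D2phi -> inRd d z ->
  (forall u v, Om (w2 z i j u v)) -> (i < d)%nat -> (j < d)%nat ->
  D2phi i j z = D2phi j i z.
Proof.
  intros [C1 [C2 [C3 [C4 C5]]]] Hz HOm Hi Hj.
  destruct (Nat.eq_dec i j) as [->|Hij]; [reflexivity|].
  set (f := fun u v => phi (w2 z i j u v)).
  assert (Hin : forall u v, inRd d (w2 z i j u v)) by (intros; apply w2_inRd; auto).
  assert (E1 : forall u v, is_derive (fun t => f u t) v (Dphi j (w2 z i j u v))).
  { intros u v. apply is_derive_Reals.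
    apply shift_lim with (g := fun h => phi (upd (w2 z i j u v) j h)).
    - intros h. unfold f. rewrite w2_j. reflexivity.
    - apply C1; auto. }
  assert (E2 : forall u v, is_derive (fun s => f s v) u (Dphi i (w2 z i j u v))).
  { intros u v. apply is_derive_Reals.
    apply shift_lim with (g := fun h => phi (upd (w2 z i j u v) i h)).
    - intros h. unfold f. rewrite w2_i by exact Hij. reflexivity.
    - apply C1; auto. }
  assert (E3 : forall u v, is_derive (fun s => Dphi j (w2 z i j s v)) u (D2phi i j (w2 z i j u v))).
  { intros u v. apply is_derive_Reals.
    apply shift_lim with (g := fun h => Dphi j (upd (w2 z i j u v) i h)).
    - intros h. rewrite w2_i by exact Hij. reflexivity.
    - apply C2; auto. }
  assert (E4 : forall u v, is_derive (fun t => Dphi i (w2 z i j u t)) v (D2phi j i (w2 z i j u v))).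
  { intros u v. apply is_derive_Reals.
    apply shift_lim with (g := fun h => Dphi i (upd (w2 z i j u v) j h)).
    - intros h. rewrite w2_j. reflexivity.
    - apply C2; auto. }
  assert (F1 : forall v, (fun s => Derive (fun t => f s t) v) = (fun s => Dphi j (w2 z i j s v))).
  { intros v. apply functional_extensionality. intros s. apply is_derive_unique, E1. }
  assert (F2 : forall u, (fun t => Derive (fun s => f s t) u) = (fun t => Dphi i (w2 z i j u t))).
  { intros u. apply functional_extensionality. intros t. apply is_derive_unique, E2. }
  assert (G1 : (fun u v => Derive (fun s => Derive (fun t => f s t) v) u) = (fun u v => D2phi i j (w2 z i j u v))).
  { apply functional_extensionality; intros u. apply functional_extensionality; intros v.
    rewrite F1. apply is_derive_unique, E3. }
  assert (G2 : (fun u v => Derive (fun t => Derive (fun s => f s t) u) v) = (fun u v => D2phi j i (w2 z i j u v))).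
  { apply functional_extensionality; intros u. apply functional_extensionality; intros v.
    rewrite F2. apply is_derive_unique, E4. }
  assert (CT : forall a b, (a < d)%nat -> (b < d)%nat -> continuity_2d_pt (fun u v => D2phi a b (w2 z i j u v)) 0 0).
  { intros a b Ha Hb eps.
    destruct (C5 a b Ha Hb z Hz) with (eps := pos eps) as [dl [Hdl Hc]].
    { rewrite <- (w2_00 z i j). apply HOm. }
    { apply cond_pos. }
    exists (mkposreal dl Hdl). intros u v Hu Hv. simpl in Hu, Hv.
    rewrite w2_00. apply Hc; auto.
    apply w2_near; auto; rewrite Rminus_0_r in *; auto. }
  pose proof (Schwarz f 0 0) as S.
  rewrite G1, G2 in S.
  pose proof (equal_f (equal_f G1 0) 0) as K1. pose proof (equal_f (equal_f G2 0) 0) as K2.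
  cbv beta in K1, K2. rewrite K1, K2, w2_00 in S.
  apply S.
  - exists (mkposreal 1 Rlt_0_1). intros u v _ _. repeat split.
    + eexists; apply E2.
    + eexists; apply E1.
    + rewrite F1. eexists; apply E3.
    + rewrite F2. eexists; apply E4.
  - apply CT; auto.
  - apply CT; auto.
Qed.


Definition emb (n : nat) (z x : nat -> R) : nat -> R :=
  fun i => if Nat.ltb i n then x i else if Nat.eqb i n then z n else 0.

Lemma emb_upd n z x i h : (i < n)%nat -> emb n z (upd x i h) = upd (emb n z x) i h.
Proof. intros Hi. apply functional_extensionality; intros k. unfold emb, upd.
  destruct (Nat.ltb_spec k n), (Nat.eqb_spec k i), (Nat.eqb_spec k n); subst; try lia; ring. Qed.

Lemma emb_inRd n z x : inRd (S n) (emb n z x).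
Proof. intros k Hk. unfold emb. destruct (Nat.ltb_spec k n), (Nat.eqb_spec k n); try lia; reflexivity. Qed.

Lemma emb_time n z x : emb n z x n = z n.
Proof. unfold emb. rewrite Nat.ltb_irrefl, Nat.eqb_refl. reflexivity. Qed.

Lemma emb_near n z x y d : 0 < d -> near n x y d -> near (S n) (emb n z x) (emb n z y) d.
Proof. intros Hd H k Hk. unfold emb. destruct (Nat.ltb_spec k n).
  - apply H; lia.
  - destruct (Nat.eqb k n); rewrite Rminus_diag, Rabs_R0; lra. Qed.

Lemma emb_proj n z : inRd (S n) z -> emb n z (proj n z) = z.
Proof. intros Hz. apply functional_extensionality; intros k. unfold emb, proj.
  destruct (Nat.ltb_spec k n), (Nat.eqb_spec k n); subst; try reflexivity. symmetry; apply Hz; lia. Qed.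

Lemma proj_emb n z x : inRd n x -> proj n (emb n z x) = x.
Proof. intros Hx. apply functional_extensionality; intros k. unfold emb, proj.
  destruct (Nat.ltb_spec k n); try reflexivity. symmetry; apply Hx; lia. Qed.

Lemma proj_inRd n x : inRd n (proj n x).
Proof. intros k Hk. unfold proj. destruct (Nat.ltb_spec k n); [lia|reflexivity]. Qed.

Lemma near_emb_z n z y d : inRd (S n) z -> 0 < d -> near n (proj n z) y d -> near (S n) z (emb n z y) d.
Proof. intros Hz Hd H. rewrite <- (emb_proj n z Hz) at 1. apply emb_near; auto. Qed.

Lemma dlim_opp g x l : derivable_pt_lim g x l -> derivable_pt_lim (fun h => - g h) x (- l).
Proof. intros H. exact (derivable_pt_lim_opp _ _ _ H). Qed.

Lemma cont_emb n z g : 0 < z n -> cont_on (S n) (spacetime n) g ->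
  cont_on n (fun _ => True) (fun x => - g (emb n z x)).
Proof.
  intros Hzn H x Hx _ eps He.
  destruct (H (emb n z x) (emb_inRd n z x) ltac:(unfold spacetime; rewrite emb_time; exact Hzn) eps He) as [d [Hd Hc]].
  exists d; split; auto. intros y Hy _ Hn.
  replace (- g (emb n z y) - - g (emb n z x)) with (- (g (emb n z y) - g (emb n z x))) by ring.
  rewrite Rabs_Ropp. apply Hc.
  - apply emb_inRd.
  - unfold spacetime; rewrite emb_time; exact Hzn.
  - apply emb_near; auto.
Qed.

Lemma C2_emb n z phi Dphi D2phi : 0 < z n ->
  C2_on (S n) (spacetime n) phi Dphi D2phi ->
  C2_on n (fun _ => True) (fun x => - phi (emb n z x)) (fun i x => - Dphi i (emb n z x))
    (fun i j x => - D2phi i j (emb n z x)).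
Proof.
  intros Hzn [C1 [C2 [C3 [C4 C5]]]].
  assert (Hsp : forall x, spacetime n (emb n z x)) by (intros; unfold spacetime; rewrite emb_time; exact Hzn).
  split; [|split; [|split; [|split]]].
  - intros x Hx _ i Hi.
    apply (derivable_pt_lim_ext (fun h => - phi (upd (emb n z x) i h))).
    { intros h. now rewrite emb_upd by exact Hi. }
    apply dlim_opp. apply C1; [apply emb_inRd|apply Hsp|lia].
  - intros x Hx _ i j Hi Hj.
    apply (derivable_pt_lim_ext (fun h => - Dphi j (upd (emb n z x) i h))).
    { intros h. now rewrite emb_upd by exact Hi. }
    apply dlim_opp. apply C2; [apply emb_inRd|apply Hsp|lia|lia].
  - apply cont_emb; auto.
  - intros i Hi. apply cont_emb; auto; apply C4; lia.
  - intros i j Hi Hj. apply cont_emb; auto; apply C5; lia.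
Qed.


Lemma X2mat_opp n m B x A j l :
  X2mat n m B x (fun i i' => - A i i') j l = - X2mat n m B x A j l.
Proof.
  unfold X2mat. rewrite <- fsum_opp. apply fsum_ext; intros i _.
  rewrite <- fsum_opp. apply fsum_ext; intros i' _. ring.
Qed.

Definition sb m (B : nat -> nat -> nat -> R) (x0 : nat -> R) i j : R :=
  1 + fsum m (fun l => Rabs (B (i - m)%nat j l) * (Rabs (x0 l) + 1)).

Lemma sb_ge1 m B x0 i j : 1 <= sb m B x0 i j.
Proof. unfold sb. assert (0 <= fsum m (fun l => Rabs (B (i - m)%nat j l) * (Rabs (x0 l) + 1))).
  { apply fsum_nonneg. intros. pose proof (Rabs_pos (B (i-m)%nat j i0)); pose proof (Rabs_pos (x0 i0)). nra. }
  lra. Qed.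

Lemma sigma_bound n m B x0 x' i j : (m < n)%nat -> near n x0 x' 1 ->
  Rabs (sigma m B x' i j) <= sb m B x0 i j.
Proof.
  intros Hmn Hn. pose proof (sb_ge1 m B x0 i j) as H1. unfold sigma.
  destruct (Nat.ltb i m).
  - destruct (Nat.eqb i j); [rewrite Rabs_R1|rewrite Rabs_R0]; lra.
  - unfold sb. apply Rle_trans with (fsum m (fun l => Rabs (B (i - m)%nat j l) * (Rabs (x0 l) + 1))); [|lra].
    apply fsum_abs_le. intros l Hl. rewrite Rabs_mult.
    apply Rmult_le_compat_l; [apply Rabs_pos|].
    specialize (Hn l ltac:(lia)).
    pose proof (Rabs_triang (x' l - x0 l) (x0 l)). replace (x' l - x0 l + x0 l) with (x' l) in H by ring. lra.
Qed.

Definition nb n m B x0 (A0 : nat -> nat -> R) j l : R :=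
  fsum n (fun i => fsum n (fun i' => sb m B x0 i j * (Rabs (A0 i i') + 1) * sb m B x0 i' l)).

Lemma X2_bound n m B x0 A0 x' A' j l : (m < n)%nat -> near n x0 x' 1 ->
  (forall i i', (i < n)%nat -> (i' < n)%nat -> Rabs (A' i i' - A0 i i') < 1) ->
  Rabs (X2mat n m B x' A' j l) <= nb n m B x0 A0 j l.
Proof.
  intros Hmn Hn HA. unfold X2mat, nb. apply fsum_abs_le. intros i Hi.
  apply fsum_abs_le. intros i' Hi'. rewrite !Rabs_mult.
  pose proof (sigma_bound n m B x0 x' i j Hmn Hn). pose proof (sigma_bound n m B x0 x' i' l Hmn Hn).
  assert (Rabs (A' i i') <= Rabs (A0 i i') + 1).
  { specialize (HA i i' Hi Hi'). pose proof (Rabs_triang (A' i i' - A0 i i') (A0 i i')).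
    replace (A' i i' - A0 i i' + A0 i i') with (A' i i') in H1 by ring. lra. }
  apply Rmult_le_compat; try apply Rabs_pos.
  - apply Rmult_le_pos; apply Rabs_pos.
  - apply Rmult_le_compat; try apply Rabs_pos; auto.
  - auto.
Qed.

Lemma Gop_upper n m B x0 A0 x' p' A' : (m < n)%nat -> near n x0 x' 1 ->
  (forall i i', (i < n)%nat -> (i' < n)%nat -> Rabs (A' i i' - A0 i i') < 1) ->
  (exists j, (j < m)%nat /\ Xvec n m B x' p' j <> 0) ->
  Gop n m B x' p' A' <= fsum m (fun j => nb n m B x0 A0 j j) + fsum m (fun j => fsum m (fun l => nb n m B x0 A0 l j)).
Proof.
  intros Hmn Hn HA Hq. unfold Gop.
  eapply Rle_trans; [apply Fop_upper, sqnorm_pos, Hq|].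
  apply Rplus_le_compat; apply fsum_le; intros j Hj.
  - apply X2_bound; auto.
  - apply fsum_le; intros l Hl. apply X2_bound; auto.
Qed.


Lemma upd_0 x i : upd x i 0 = x.
Proof. apply functional_extensionality; intros k. unfold upd. destruct (Nat.eqb k i); ring. Qed.

Theorem proposition4p2 (n m : nat) (B : nat -> nat -> nat -> R)
  (U : (nat -> R) -> R) (alpha c r : R) :
  (2 <= m)%nat -> (m < n)%nat ->
  skew_family n m B -> lin_indep_family n m B ->
  cont_on n (fun _ => True) U ->
  0 < alpha -> vconvex_with n m B U alpha ->
  c >= - (INR m - 1) * alpha ->
  supersol n m B (fun z => c * z n - U (proj n z) + r).
Proof.
  intros Hm Hmn Hskew Hind HU Ha Hv Hc.
  split.
  - intros x Hx Hsp eps He.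
    destruct (HU (proj n x) (proj_inRd n x) I (eps/2) ltac:(lra)) as [d1 [Hd1 HU1]].
    assert (Hk : 0 < Rabs c + 1) by (pose proof (Rabs_pos c); lra).
    set (e' := eps / (2 * (Rabs c + 1))).
    assert (He' : 0 < e') by (unfold e'; apply Rdiv_lt_0_compat; lra).
    assert (He'2 : e' * (2 * (Rabs c + 1)) = eps) by (unfold e'; field; lra).
    exists (Rmin d1 e'). split; [apply Rmin_pos; lra|].
    intros y Hy Hspy Hn.
    assert (Hyn : Rabs (y n - x n) < Rmin d1 e') by (apply Hn; lia).
    assert (Hnp : near n (proj n x) (proj n y) d1).
    { intros i Hi. unfold proj. destruct (Nat.ltb_spec i n); [|lia].
      eapply Rlt_le_trans; [apply Hn; lia|apply Rmin_l]. }
    pose proof (HU1 (proj n y) (proj_inRd n y) I Hnp) as HUy.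
    pose proof (Rmin_r d1 e').
    assert (Hcd : Rabs (c * (y n - x n)) < eps / 2).
    { rewrite Rabs_mult. pose proof (Rabs_pos c). pose proof (Rabs_pos (y n - x n)).
      assert (Rabs c * Rabs (y n - x n) <= Rabs c * e') by (apply Rmult_le_compat_l; lra). nra. }
    apply Rabs_def2 in HUy. apply Rabs_def2 in Hcd. lra.
  - intros phi Dphi D2phi HC2 z Hz Hsp [d0 [Hd0 Hmin]].
    assert (Hsym : forall i j, (i < n)%nat -> (j < n)%nat -> D2phi i j z = D2phi j i z).
    { intros i j Hi Hj. apply (schwarz_C2 (S n) (spacetime n) phi Dphi D2phi z i j HC2 Hz); try lia.
      intros u v. unfold spacetime, w2, upd. destruct (Nat.eqb_spec n j), (Nat.eqb_spec n i); try lia. exact Hsp. }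
    assert (Ht : Dphi n z >= c).
    { destruct HC2 as [C1 _]. pose proof (C1 z Hz Hsp n ltac:(lia)) as D.
      apply Rnot_lt_ge. intros Hlt.
      destruct (D (c - Dphi n z) ltac:(lra)) as [dd Hdd].
      pose proof (cond_pos dd) as Hddp.
      unfold spacetime in Hsp.
      set (h := - Rmin dd (Rmin d0 (z n)) / 2).
      assert (Hmin1 : 0 < Rmin dd (Rmin d0 (z n))) by (repeat apply Rmin_pos; lra).
      pose proof (Rmin_l dd (Rmin d0 (z n))). pose proof (Rmin_r dd (Rmin d0 (z n))).
      pose proof (Rmin_l d0 (z n)). pose proof (Rmin_r d0 (z n)).
      assert (Hh : h < 0) by (unfold h; lra).
      assert (Hah : Rabs h = Rmin dd (Rmin d0 (z n)) / 2) by (rewrite Rabs_left by lra; unfold h; lra).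
      assert (Hh2 : - h = Rmin dd (Rmin d0 (z n)) / 2) by (rewrite <- Hah, Rabs_left; lra).
      clearbody h.
      specialize (Hdd h ltac:(lra) ltac:(rewrite Hah; lra)).
      rewrite Rplus_0_l, upd_0 in Hdd.
      assert (Hy : inRd (S n) (upd z n h)).
      { intros k Hk. unfold upd. destruct (Nat.eqb_spec k n); [lia|]. apply Hz; lia. }
      assert (Hyn : upd z n h n = z n + h) by (unfold upd; rewrite Nat.eqb_refl; reflexivity).
      assert (Hpy : proj n (upd z n h) = proj n z).
      { apply functional_extensionality; intros k. unfold proj, upd.
        destruct (Nat.ltb_spec k n), (Nat.eqb_spec k n); try lia; reflexivity. }
      assert (Hnear : near (S n) z (upd z n h) d0).
      { intros k Hk. unfold upd. destruct (Nat.eqb_spec k n).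
        - replace (z k + h - z k) with h by ring. lra.
        - rewrite Rminus_diag, Rabs_R0; lra. }
      pose proof (Hmin (upd z n h) Hy ltac:(unfold spacetime; rewrite Hyn; lra) Hnear) as Hm1.
      cbv beta in Hm1. rewrite Hyn, Hpy in Hm1.
      set (qq := (phi (upd z n h) - phi z) / h) in Hdd.
      assert (Eq : phi (upd z n h) - phi z = qq * h) by (unfold qq; field; lra).
      clearbody qq.
      apply Rabs_def2 in Hdd. nra. }
    assert (Hvx : forall xi, fsum m (fun j => fsum m (fun l => xi j * (- X2mat n m B (proj n z) (fun i i' => D2phi i i' z) j l) * xi l)) >= alpha * sqnorm m xi).
    { intros xi.
      assert (Hloc : exists delta, 0 < delta /\ forall y, inRd n y -> near n (proj n z) y delta ->
          U y - (fun x => - phi (emb n z x)) y <= U (proj n z) - (fun x => - phi (emb n z x)) (proj n z)).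
      { exists d0. split; auto. intros y Hy Hn.
        pose proof (Hmin (emb n z y) (emb_inRd n z y) ltac:(unfold spacetime; rewrite emb_time; exact Hsp)
                      (near_emb_z n z y d0 Hz Hd0 Hn)) as H.
        cbv beta in H |- *. rewrite emb_time, proj_emb in H by exact Hy. rewrite emb_proj by exact Hz. lra. }
      pose proof (Hv _ _ _ (C2_emb n z phi Dphi D2phi Hsp HC2) (proj n z) (proj_inRd n z) Hloc xi) as V.
      cbv beta in V. rewrite emb_proj in V by exact Hz.
      eapply Rge_trans; [|exact V]. right. apply fsum_ext; intros j _. apply fsum_ext; intros l _.
      rewrite X2mat_opp. reflexivity. }
    set (W := fun w => forall dl, 0 < dl -> exists x' t' p' A', G_dom n m B x' t' p' A' /\
              close4 n (proj n z) (z n) (proj n (fun i => Dphi i z)) (fun i j => D2phi i j z) x' t' p' A' dl /\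
              Gop n m B x' p' A' >= w).
    assert (HW0 : W ((INR m - 1) * alpha)).
    { intros dl Hdl.
      set (p0 := proj n (fun i => Dphi i z)).
      set (q00 := Xvec n m B (proj n z) p0 0).
      set (s := if Req_EM_T (q00 + dl/2) 0 then dl/4 else dl/2).
      assert (Hs : q00 + s <> 0 /\ 0 < s < dl).
      { unfold s; destruct (Req_EM_T (q00 + dl/2) 0); split; try lra; intro; lra. }
      assert (HX : Xvec n m B (proj n z) (upd p0 0 s) 0 = q00 + s).
      { unfold Xvec, q00, Xvec. rewrite fsum_upd by lia. unfold sigma.
        replace (Nat.ltb 0 m) with true by (symmetry; apply Nat.ltb_lt; lia). simpl. ring. }
      exists (proj n z), (z n), (upd p0 0 s), (fun i j => D2phi i j z).
      split; [|split].
      - split; [apply proj_inRd|]. split; [exact Hsp|]. split.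
        { intros k Hk. unfold upd. destruct (Nat.eqb_spec k 0); [lia|]. apply proj_inRd; exact Hk. }
        split; [exact Hsym|]. exists 0%nat. split; [lia|]. rewrite HX. apply Hs.
      - split; [|split; [|split]].
        + intros i Hi. rewrite Rminus_diag, Rabs_R0; lra.
        + rewrite Rminus_diag, Rabs_R0; lra.
        + intros i Hi. unfold upd. destruct (Nat.eqb i 0).
          * replace (p0 i + s - p0 i) with s by ring. rewrite Rabs_right; lra.
          * rewrite Rminus_diag, Rabs_R0; lra.
        + intros i j Hi Hj. rewrite Rminus_diag, Rabs_R0; lra.
      - unfold Gop. apply Fop_lower; [|exact Hvx].
        exists 0%nat. split; [lia|]. rewrite HX. apply Hs. }
    set (K := fsum m (fun j => nb n m B (proj n z) (fun i j => D2phi i j z) j j)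
            + fsum m (fun j => fsum m (fun l => nb n m B (proj n z) (fun i j => D2phi i j z) l j))).
    assert (HWb : forall w, W w -> w <= K).
    { intros w Hw. destruct (Hw 1 Rlt_0_1) as (x' & t' & p' & A' & Hd & Hcl & Hg).
      destruct Hd as (_ & _ & _ & _ & Hq). destruct Hcl as (Hn & _ & _ & HA).
      pose proof (Gop_upper n m B (proj n z) (fun i j => D2phi i j z) x' p' A' Hmn Hn HA Hq). unfold K. lra. }
    destruct (completeness W) as [L [HL1 HL2]].
    { exists K. intros w Hw. apply HWb, Hw. }
    { eexists; exact HW0. }
    exists L. split.
    + intros eps He. split.
      * apply NNPP. intros Hno.
        assert (HWe : W (L + eps)).
        { intros dl Hdl. apply NNPP. intros Hno2. apply Hno. exists dl. split; auto.
          intros x' t' p' A' Hd Hcl. apply Rnot_ge_lt. intros Hge. apply Hno2.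
          exists x', t', p', A'. auto. }
        specialize (HL1 _ HWe). lra.
      * intros dl Hdl.
        assert (Hex : exists w, W w /\ w > L - eps).
        { apply NNPP. intros Hno.
          assert (L <= L - eps).
          { apply HL2. intros w Hw. apply Rnot_gt_le. intros Hg. apply Hno. exists w; auto. }
          lra. }
        destruct Hex as [w [Hw Hgt]]. destruct (Hw dl Hdl) as (x' & t' & p' & A' & H1 & H2 & H3).
        exists x', t', p', A'. split; auto. split; auto. lra.
    + specialize (HL1 _ HW0). lra.
Qed.
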